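(* Let $G$ be a simple connected bipartite graph on $n\ge 3$ vertices with maximum degree $\Delta\le n-2$, and let $S=\sum_{j=1}^{n}D_j$. Suppose $\deg(v_1)=\cdots=\deg(v_k)=\Delta$, and for $1\le i\le k$ let $a_i=(\Delta+1)(S-2D_i-2t_{v_i}\Delta)+2n\Delta^{2}$ and $b_i=D_i^{2}-2S\Delta^{2}+2D_it_{v_i}\Delta+t_{v_i}^{2}\Delta^{2}$. Then (i) $\displaystyle \rho^{\mathcal{D}}(G)\ge \max_{1\le i\le k}\frac{a_i+\sqrt{a_i^{2}+4b_i(1+\Delta)(n-\Delta-1)}}{2(1+\Delta)(n-\Delta-1)}$; (ii) $\displaystyle \rho^{\mathcal{D}}_{min}(G)\le \min_{1\le i\le k}\frac{a_i-\sqrt{a_i^{2}+4b_i(1+\Delta)(n-\Delta-1)}}{2(1+\Delta)(n-\Delta-1)}$.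
   Context: $G$ has vertex set $\{v_1,\dots,v_n\}$; $d_G(u,v)$ denotes the distance in $G$. The distance matrix is $\mathcal{D}(G)=(d_G(v_i,v_j))$. The transmission of $v_i$ is $D_i=\sum_{j\ne i}d_G(v_i,v_j)$. For a vertex $v$ of degree $d_v$, $t_v=\frac{1}{d_v}\sum_{v_j\sim v}D_j$. $\rho^{\mathcal{D}}(G)$ and $\rho^{\mathcal{D}}_{min}(G)$ are the largest and least eigenvalues of $\mathcal{D}(G)$. *)

(* Defs.v *)
From HB Require Import structures.
From mathcomp Require Import all_boot all_order all_algebra.
From mathcomp Require Import reals.
Set Implicit Arguments. Unset Strict Implicit. Unset Printing Implicit Defensive.
Import Order.TTheory GRing.Theory Num.Theory.
Local Open Scope ring_scope.

(* Graphs: a relation e on 'I_n (vertices v_1..v_n are the ordinals 0..n-1). *)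
Definition simple_graph (n : nat) (e : rel 'I_n) : Prop :=
  symmetric e /\ irreflexive e.

Definition connected_graph (n : nat) (e : rel 'I_n) : Prop :=
  forall x y : 'I_n, connect e x y.

Definition bipartite (n : nat) (e : rel 'I_n) : Prop :=
  exists c : 'I_n -> bool, forall x y, e x y -> c x != c y.

Definition deg (n : nat) (e : rel 'I_n) (x : 'I_n) : nat := #|[set y | e x y]|.

Definition maxdeg (n : nat) (e : rel 'I_n) : nat := (\max_(x : 'I_n) deg e x)%N.

Fixpoint walkn (n : nat) (e : rel 'I_n) (k : nat) (x y : 'I_n) : bool :=
  if k is k'.+1 then [exists z, e x z && walkn e k' z y] else x == y.

(* graph distance: least length of a walk from x to y (= #|I_n| if none) *)
Definition dist (n : nat) (e : rel 'I_n) (x y : 'I_n) : nat :=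
  find (fun k => walkn e k x y) (iota 0 n).

Definition distmx (R : realType) (n : nat) (e : rel 'I_n) : 'M[R]_n :=
  \matrix_(i, j) (dist e i j)%:R.

Definition trans (R : realType) (n : nat) (e : rel 'I_n) (i : 'I_n) : R :=
  \sum_(j < n | j != i) (dist e i j)%:R.

Definition tv (R : realType) (n : nat) (e : rel 'I_n) (v : 'I_n) : R :=
  (deg e v)%:R^-1 * \sum_(j < n | e v j) trans R e j.

Definition is_largest_eig (R : realType) (n : nat) (A : 'M[R]_n) (r : R) : Prop :=
  eigenvalue A r /\ forall x, eigenvalue A x -> x <= r.

Definition is_least_eig (R : realType) (n : nat) (A : 'M[R]_n) (r : R) : Prop :=
  eigenvalue A r /\ forall x, eigenvalue A x -> r <= x.

(* Main.v *)
Require Import Defs.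
From HB Require Import structures.
From mathcomp Require Import all_boot all_order all_algebra.
From mathcomp Require Import reals.
From mathcomp Require Import complex ring lra.
Import Order.TTheory GRing.Theory Num.Theory.
Local Open Scope ring_scope.

Section Spec.
Local Open Scope sesquilinear_scope.
Lemma spectral_real (R : rcfType) n (A : 'M[R]_n) : A^T = A ->
  forall x : 'rV[R]_n, exists r w : 'I_n -> R,
   [/\ forall j, eigenvalue A (r j), forall j, 0 <= w j,
       (x *m x^T) 0 0 = \sum_j w j & (x *m A *m x^T) 0 0 = \sum_j r j * w j].
Proof.
move=> Asym x.
have freal : forall a : R, (real_complex R) a \is Num.real.
  by move=> a; apply/complex_realP; exists a.
pose Ac := map_mx (real_complex R) A.
have Acsym : Ac \is symmetricmx.
  apply/is_hermitianmxP; rewrite expr0 scale1r.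
  apply/matrixP => i j; rewrite !mxE -[in LHS]Asym mxE. done.
have Acreal : Ac \is a realmx.
  by apply/mxOverP => i j; rewrite mxE.
have Acherm := realsym_hermsym Acsym Acreal.
have /orthomx_spectralP hAc := hermitian_normalmx Acherm.
set P := spectralmx Ac in hAc; set d := spectral_diag Ac in hAc.
have Pu : P \is unitarymx := spectral_unitarymx Ac.
have Punit : P \in unitmx := spectral_unit Ac.
have dreal : d \is a realmx := hermitian_spectral_diag_real Acherm.
rewrite invmx_unitary // in hAc.
have PPt : P *m P^t* = 1%:M by apply/unitarymxP.
have PtP : P^t* *m P = 1%:M by rewrite -invmx_unitary // mulVmx.
pose r j := complex.Re (d 0 j).
have fr : forall j, (real_complex R) (r j) = d 0 j.
  by move=> j; rewrite /r RRe_real //; apply: (mxOverP dreal).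
pose xc := map_mx (real_complex R) x.
pose y := xc *m P^t*.
pose w j := complex.Re (y 0 j * (y 0 j)^*).
have ywreal : forall j, y 0 j * (y 0 j)^* \is Num.real.
  by move=> j; rewrite -normCK realX // normr_real.
have fw : forall j, (real_complex R) (w j) = y 0 j * (y 0 j)^*.
  by move=> j; rewrite /w RRe_real.
have xct : xc^t* = map_mx (real_complex R) x^T.
  by apply/matrixP => i j; rewrite !mxE conj_Creal.
have yt : y^t* = P *m xc^t*.
  apply/matrixP => i j; rewrite !mxE rmorph_sum; apply: eq_bigr => k _.
  by rewrite !mxE rmorphM /= conjCK mulrC.
exists r, w; split.
- move=> j; rewrite eigenvalue_root_char -(fmorph_root (real_complex R)) map_char_poly.
rewrite [X in root _ X](_ : _ = d 0 j); last exact: fr.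
rewrite -eigenvalue_root_char; apply/eigenvalueP; exists (row j P).
    rewrite -row_mul.
    have -> : P *m (Ac : 'M_n) = diag_mx d *m P.
      by rewrite [X in P *m X]hAc !mulmxA PPt mul1mx.
    by apply/rowP => k; rewrite mul_diag_mx !mxE.
  apply/eqP => /rowP hr.
  move: (PPt) => /matrixP /(_ j j); rewrite !mxE eqxx /= big1 //.
    by move/esym/eqP; rewrite oner_eq0.
  by move=> k _; have := hr k; rewrite !mxE => ->; rewrite mul0r.
- by move=> j; rewrite -ler0c fw mul_conjC_ge0.
- apply: (@complexI R); rewrite rmorph_sum /=.
  under eq_bigr do rewrite fw.
  have -> : (real_complex R) ((x *m x^T) 0 0) = (xc *m xc^t*) 0 0.
    by rewrite xct /xc -map_mxM [RHS]mxE.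
  have -> : xc *m xc^t* = y *m y^t*.
    by rewrite yt /y mulmxA -(mulmxA xc) PtP mulmx1.
  by rewrite mxE; apply: eq_bigr => k _; rewrite !mxE.
- apply: (@complexI R); rewrite rmorph_sum /=.
  under eq_bigr do rewrite rmorphM /= fw fr.
  have -> : (real_complex R) ((x *m A *m x^T) 0 0) = (xc *m Ac *m xc^t*) 0 0.
    by rewrite xct /xc /Ac -!map_mxM [RHS]mxE.
  have -> : xc *m Ac *m xc^t* = y *m diag_mx d *m y^t*.
    by rewrite yt hAc /y !mulmxA.
  rewrite mxE; apply: eq_bigr => k _; rewrite mul_mx_diag !mxE.
  by rewrite mulrCA mulrA.
Qed.

End Spec.

Lemma psd2 (R : rcfType) (G C H : R) :
  (forall al be : R, 0 <= G * al^+2 - 2 * C * al * be + H * be^+2) ->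
  [/\ 0 <= G, 0 <= H & C^+2 <= G * H].
Proof.
move=> hQ.
have hG : 0 <= G by have := hQ 1 0; rewrite !expr2; nra.
have hH : 0 <= H by have := hQ 0 1; rewrite !expr2; nra.
split => //.
have [G0|Gpos] := eqVneq G 0.
  have := hQ (H + 1) C; rewrite G0 !expr2 => h.
  nra.
have Gp : 0 < G by rewrite lt_def Gpos hG.
have := hQ C G; rewrite !expr2 => h.
nra.
Qed.

Lemma sqrt_le_aux (R : rcfType) (d t : R) : 0 <= t -> d <= t^+2 -> Num.sqrt d <= t.
Proof.
move=> ht hd.
have [d0|dpos] := ltP d 0.
  by rewrite ltr0_sqrtr.
by rewrite -(ger0_norm ht) -sqrtr_sqr ler_sqrt // ?exprn_ge0 ?normr_id.

Qed.

Lemma upper_bound (R : rcfType) (P C E u m rho : R) : 0 < u -> 0 < m ->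
  (forall al be : R, P*al^+2 + 2*C*al*be + E*be^+2 <= rho*(u*al^+2+m*be^+2)) ->
  (P* m+E*u + Num.sqrt ((P* m+E*u)^+2 + 4*(C^+2-P*E)*u* m))/(2*u* m) <= rho.
Proof.
move=> hu hm hQ.
have [hG hH hGH] : [/\ 0 <= rho*u - P, 0 <= rho * m - E & C^+2 <= (rho*u - P)*(rho * m-E)].
  apply: psd2 => al be; have := hQ al be; rewrite -subr_ge0 => h.
  apply: (le_trans h); rewrite le_eqVlt; apply/orP; left; apply/eqP; ring.
have hum : 0 < 2*u* m by rewrite !mulr_gt0.
rewrite ler_pdivrMr //.
have : Num.sqrt ((P* m+E*u)^+2 + 4*(C^+2-P*E)*u* m) <= m*(rho*u-P) + u*(rho* m-E).
  apply: sqrt_le_aux; first by rewrite addr_ge0 // mulr_ge0 // ltW.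
  rewrite !expr2 in hGH *; nra.
lra.
Qed.

Lemma lower_bound (R : rcfType) (P C E u m rho : R) : 0 < u -> 0 < m ->
  (forall al be : R, rho*(u*al^+2+m*be^+2) <= P*al^+2 + 2*C*al*be + E*be^+2) ->
  rho <= (P* m+E*u - Num.sqrt ((P* m+E*u)^+2 + 4*(C^+2-P*E)*u* m))/(2*u* m).
Proof.
move=> hu hm hQ.
have [hG hH hGH] : [/\ 0 <= P - rho*u, 0 <= E - rho * m & (-C)^+2 <= (P - rho*u)*(E - rho * m)].
  apply: psd2 => al be; have := hQ al be; rewrite -subr_ge0 => h.
  apply: (le_trans h); rewrite le_eqVlt; apply/orP; left; apply/eqP; ring.
have hum : 0 < 2*u* m by rewrite !mulr_gt0.
rewrite ler_pdivlMr //.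
have : Num.sqrt ((P* m+E*u)^+2 + 4*(C^+2-P*E)*u* m) <= m*(P - rho*u) + u*(E - rho* m).
  apply: sqrt_le_aux; first by rewrite addr_ge0 // mulr_ge0 // ltW.
  rewrite !expr2 in hGH *; nra.
lra.
Qed.

Lemma walkn_last n (e : rel 'I_n) k x y :
  walkn e k.+1 x y = [exists z, walkn e k x z && e z y].
Proof.
elim: k x y => [|k IH] x y.
  apply/existsP/existsP => [[z /andP[hxz /eqP <-]]|[z /andP[/eqP <- hxz]]].
    by exists x; rewrite /= eqxx.
  by exists y; rewrite /= hxz eqxx.
rewrite (_ : walkn e k.+2 x y = [exists z, e x z && walkn e k.+1 z y]) //.
apply/existsP/existsP => [[z /andP[hxz]]|[z /andP[]]].
  rewrite IH => /existsP[z' /andP[h1 h2]].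
  exists z'; rewrite h2 andbT; apply/existsP; exists z; by rewrite hxz.
move=> /existsP[z' /andP[h1 h2]] hzy.
exists z'; rewrite h1 IH; apply/existsP; exists z; rewrite hzy andbT; exact: h2.
Qed.

Lemma walkn_sym n (e : rel 'I_n) : symmetric e -> forall k x y,
  walkn e k x y = walkn e k y x.
Proof.
move=> esym; elim=> [|k IH] x y; first by rewrite /= eq_sym.
rewrite walkn_last /=; apply/existsP/existsP => [[z /andP[h1 h2]]|[z /andP[h1 h2]]].
  by exists z; rewrite esym h2 -IH h1.
by exists z; rewrite IH h2 esym h1.
Qed.

Lemma dist_sym n (e : rel 'I_n) : symmetric e -> forall x y, dist e x y = dist e y x.
Proof.
move=> esym x y; rewrite /dist; apply: eq_find => k; exact: walkn_sym.
Qed.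

Lemma iota3 n : (3 <= n)%N -> iota 0 n = [:: 0, 1, 2 & iota 3 (n - 3)]%N.
Proof. by move=> hn; rewrite -{1}(subnKC hn) iotaD. Qed.

Lemma dist_ii n (e : rel 'I_n) x : (3 <= n)%N -> dist e x x = 0%N.
Proof. by move=> hn; rewrite /dist iota3 //= eqxx. Qed.

Lemma walkn1 n (e : rel 'I_n) x y : walkn e 1 x y = e x y.
Proof.
apply/existsP/idP => [[z /andP[h /eqP <-]]//|h].
by exists y; rewrite h eqxx.
Qed.

Lemma dist_adj n (e : rel 'I_n) x y : (3 <= n)%N -> irreflexive e -> e x y ->
  dist e x y = 1%N.
Proof.
move=> hn irr hxy; rewrite /dist iota3 //=.
have -> : (x == y) = false by apply/negbTE; apply: contraTneq hxy => ->; rewrite irr.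
have -> : [exists z, e x z && (z == y)] = e x y by exact: walkn1.
by rewrite hxy.
Qed.

Lemma dist_two n (e : rel 'I_n) v x y : (3 <= n)%N -> symmetric e -> bipartite e ->
  e v x -> e v y -> x != y -> dist e x y = 2%N.
Proof.
move=> hn esym [c hc] hvx hvy hxy; rewrite /dist iota3 //= (negbTE hxy).
have -> : [exists z, e x z && (z == y)] = e x y by exact: walkn1.
have -> : e x y = false.
  apply/negbTE/negP => exy.
  have := hc _ _ hvx; have := hc _ _ hvy; have := hc _ _ exy.
  by case: (c x); case: (c y); case: (c v).
have h2 : walkn e 2 x y.
  by apply/existsP; exists v; rewrite esym hvx /=; apply/existsP; exists y; rewrite hvy eqxx.
by move: h2 => /= ->.
Qed.

Lemma expand (R : comRingType) n (d : 'I_n -> 'I_n -> R) (c : 'I_n -> R) (al be : R) :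
 (forall i j, d i j = d j i) ->
 \sum_i \sum_j (be + (al-be)*c i) * d i j * (be + (al-be)*c j) =
 be^+2 * (\sum_i \sum_j d i j) + 2 * be * (al-be) * (\sum_i c i * \sum_j d i j)
 + (al-be)^+2 * (\sum_i \sum_j c i * c j * d i j).
Proof.
move=> dsym; set g := al - be.
transitivity (\sum_i \sum_j (be^+2 * d i j) + \sum_i \sum_j (be*g*(c i * d i j))
   + \sum_i \sum_j (be*g*(c j * d i j)) + \sum_i \sum_j (g^+2 * (c i * c j * d i j))).
  rewrite -!big_split; apply: eq_bigr => i _; rewrite -!big_split.
  by apply: eq_bigr => j _ /=; ring.
have h3 : \sum_i \sum_j (be*g*(c j * d i j)) = \sum_i \sum_j (be*g*(c i * d i j)).
  rewrite exchange_big; apply: eq_bigr => i _; apply: eq_bigr => j _.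
  by rewrite dsym.
have e1 : \sum_i \sum_j (be^+2 * d i j) = be^+2 * (\sum_i \sum_j d i j).
  by rewrite mulr_sumr; apply: eq_bigr => i _; rewrite mulr_sumr.
have e2 : \sum_i \sum_j (be*g*(c i * d i j)) = be*g * (\sum_i c i * \sum_j d i j).
  by rewrite mulr_sumr; apply: eq_bigr => i _; rewrite !mulr_sumr.
have e4 : \sum_i \sum_j (g^+2 * (c i * c j * d i j)) = g^+2 * (\sum_i \sum_j c i * c j * d i j).
  by rewrite mulr_sumr; apply: eq_bigr => i _; rewrite mulr_sumr.
rewrite h3 e1 e2 e4; ring.
Qed.

Lemma sum_ind (R : comRingType) (I : finType) (B : {set I}) (F : I -> R) :
  \sum_i (i \in B)%:R * F i = \sum_(i in B) F i.
Proof.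
rewrite [RHS]big_mkcond; apply: eq_bigr => i _.
by case: (i \in B); rewrite ?mul1r ?mul0r.
Qed.

Lemma key (R : realType) n (e : rel 'I_n) v (al be : R) :
  simple_graph e -> bipartite e -> (3 <= n)%N -> (0 < deg e v)%N ->
  let Dl : R := (deg e v)%:R in
  let Dv := trans R e v in let t := tv R e v in
  let S : R := \sum_(j < n) trans R e j in
  let x := \row_j (be + (al - be) * (j \in v |: [set y | e v y])%:R) : 'rV[R]_n in
  (x *m distmx R e *m x^T) 0 0 = 2*Dl^+2 * al^+2 + 2*(Dv + Dl*t - 2*Dl^+2)*al*be
      + (S - 2*(Dv+Dl*t) + 2*Dl^+2) * be^+2
  /\ (x *m x^T) 0 0 = (1 + Dl)*al^+2 + (n%:R - Dl - 1)*be^+2.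
Proof.
move=> [esym irr] bip hn hdeg Dl Dv t S x.
set N := [set y | e v y]; set B := v |: N.
have vN : v \notin N by rewrite inE irr.
have cardN : #|N| = deg e v by [].
have Dl0 : Dl != 0 by rewrite pnatr_eq0 -lt0n.
pose d i j : R := (dist e i j)%:R.
have dsym i j : d i j = d j i by rewrite /d dist_sym.
have dii i : d i i = 0 by rewrite /d dist_ii.
have transE i : trans R e i = \sum_j d i j by rewrite [RHS](bigD1 i) //= dii add0r.
pose c j : R := (j \in B)%:R.
have quad : (x *m distmx R e *m x^T) 0 0 =
    \sum_i \sum_j (be + (al-be)*c i) * d i j * (be + (al-be)*c j).
  rewrite mxE; under eq_bigr do rewrite mxE mulr_suml.
  rewrite exchange_big; apply: eq_bigr => i _; apply: eq_bigr => j _.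
  by rewrite !mxE.
have SS : \sum_i \sum_j d i j = S by apply: eq_bigr => i _; rewrite transE.
have Rs : \sum_i c i * \sum_j d i j = Dv + Dl * t.
  transitivity (\sum_(i in B) trans R e i).
    by rewrite -sum_ind; apply: eq_bigr => i _; rewrite transE.
  rewrite big_setU1 //=; congr (_ + _).
  rewrite /t /tv mulrA mulfV // mul1r.
  by apply: eq_bigl => j; rewrite inE.
have T11 : \sum_i \sum_j c i * c j * d i j = 2 * Dl^+2.
  transitivity (\sum_(i in B) \sum_(j in B) d i j).
    rewrite -sum_ind; apply: eq_bigr => i _; rewrite -sum_ind mulr_sumr.
    by apply: eq_bigr => j _; rewrite mulrA.
  rewrite big_setU1 //= big_setU1 //= dii add0r.
  have h1 : \sum_(j in N) d v j = Dl.
    rewrite (eq_bigr (fun _ => 1)) => [|j hj]; first by rewrite sumr_const cardN.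
    by rewrite /d dist_adj //; rewrite inE in hj.
  have h2 : forall i, i \in N -> \sum_(j in B) d i j = 2*Dl - 1.
    move=> i hi; rewrite big_setU1 //= dsym /d dist_adj //; last by rewrite inE in hi.
    rewrite (bigD1 i) //= dist_ii // add0r.
    rewrite (eq_bigr (fun _ => 2)) => [|j /andP[hj hji]]; last first.
      move: hi hj; rewrite !inE => hi hj; rewrite (@dist_two _ _ v i j) //; by rewrite eq_sym.
    have h : \sum_(j in N) (2:R) = 2 + \sum_(j in N | j != i) 2 by rewrite (bigD1 i).
    rewrite sumr_const cardN in h.
    have h' : (2:R) *+ deg e v = 2 * Dl by rewrite mulr_natr.
    lra.
  rewrite h1 (eq_bigr (fun _ => 2*Dl - 1)) => [|i hi]; last exact: h2.
  rewrite sumr_const cardN -/Dl mulr_natr.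
  ring.
split.
  rewrite quad expand // SS Rs T11; ring.
have xx : (x *m x^T) 0 0 = \sum_j (be^+2 + (2*be*(al-be) + (al-be)^+2) * c j).
  rewrite mxE; apply: eq_bigr => j _; rewrite !mxE.
  rewrite -/(c j); have : c j * c j = c j by rewrite /c; case: (j \in B); rewrite ?mulr1 ?mulr0.
  move=> cc; rewrite (_ : (be + (al - be) * c j) * (be + (al - be) * c j) = be^+2 + 2*be*(al-be)*c j + (al-be)^+2*(c j * c j)); last by ring.
  rewrite cc; ring.
rewrite xx big_split /= [X in _ + X](_ : _ = (2*be*(al-be) + (al-be)^+2) * \sum_j c j); last by rewrite mulr_sumr.
have -> : \sum_j c j = 1 + Dl.
  rewrite (eq_bigr (fun j => (j \in B)%:R * 1)); last by move=> j _; rewrite mulr1.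
  rewrite sum_ind.
  by rewrite sumr_const cardsU1 vN cardN natrD.
rewrite sumr_const card_ord. rewrite -mulr_natr. ring.
Qed.


Lemma ray_max (R : rcfType) n (A : 'M[R]_n) rho : A^T = A ->
  (forall z, eigenvalue A z -> z <= rho) ->
  forall x : 'rV[R]_n, (x *m A *m x^T) 0 0 <= rho * (x *m x^T) 0 0.
Proof.
move=> As hmax x; have [r [w [h1 h2 h3 h4]]] := @spectral_real _ _ A As x.
rewrite h3 h4 mulr_sumr; apply: ler_sum => j _.
by rewrite ler_wpM2r // hmax.
Qed.

Lemma ray_min (R : rcfType) n (A : 'M[R]_n) rho : A^T = A ->
  (forall z, eigenvalue A z -> rho <= z) ->
  forall x : 'rV[R]_n, rho * (x *m x^T) 0 0 <= (x *m A *m x^T) 0 0.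
Proof.
move=> As hmin x; have [r [w [h1 h2 h3 h4]]] := @spectral_real _ _ A As x.
rewrite h3 h4 mulr_sumr; apply: ler_sum => j _.
by rewrite ler_wpM2r // hmin.
Qed.

Lemma deg_pos n (e : rel 'I_n) (i : 'I_n) : (3 <= n)%N -> connected_graph e ->
  (0 < deg e i)%N.
Proof.
move=> hn hconn.
have [y hy] : exists y : 'I_n, y != i.
  have h0 : (0 < n)%N by apply: leq_trans hn.
  have h1 : (1 < n)%N by apply: leq_trans hn.
  case: (eqVneq i (Ordinal h0)) => hi.
    by exists (Ordinal h1); rewrite hi; apply/eqP => -[].
  by exists (Ordinal h0); rewrite eq_sym.
have /connectP [p hp hl] := hconn i y.
case: p hp hl => [|z p] /=; first by move=> _ hyi; rewrite hyi eqxx in hy.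
move=> /andP[hiz _] _.
rewrite /deg card_gt0; apply/set0Pn; exists z; by rewrite inE.
Qed.

Theorem corollary3p3 (R : realType) (n : nat) (e : rel 'I_n) (k : nat)
  (hsimple : simple_graph e) (hconn : connected_graph e) (hbip : bipartite e)
  (hn : (3 <= n)%N) (hDelta : (maxdeg e <= n - 2)%N)
  (hk1 : (1 <= k)%N) (hk : (k <= n)%N)
  (hdegk : forall i : 'I_n, (i < k)%N -> deg e i = maxdeg e) :
  let Delta : R := (maxdeg e)%:R in
  let S : R := \sum_(j < n) trans R e j in
  let a := fun i : 'I_n =>
    (Delta + 1) * (S - 2 * trans R e i - 2 * tv R e i * Delta)
    + 2 * n%:R * Delta ^+ 2 in
  let b := fun i : 'I_n =>
    trans R e i ^+ 2 - 2 * S * Delta ^+ 2 + 2 * trans R e i * tv R e i * Delta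
    + tv R e i ^+ 2 * Delta ^+ 2 in
  let den : R := 2 * (1 + Delta) * (n%:R - Delta - 1) in
  (forall rho, is_largest_eig (distmx R e) rho ->
     forall i : 'I_n, (i < k)%N ->
       (a i + Num.sqrt (a i ^+ 2 + 4 * b i * (1 + Delta) * (n%:R - Delta - 1)))
         / den <= rho)
  /\
  (forall rho, is_least_eig (distmx R e) rho ->
     forall i : 'I_n, (i < k)%N ->
       rho <= (a i - Num.sqrt (a i ^+ 2 + 4 * b i * (1 + Delta) * (n%:R - Delta - 1)))
         / den).

Proof.
move=> Delta S a b den.
have As : (distmx R e)^T = distmx R e.
  apply/matrixP => i j; rewrite !mxE dist_sym //; by case: hsimple.
have hmD : (maxdeg e + 1 < n)%N.
  have h2 : (2 <= n)%N by apply: leq_trans hn.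
  move: hDelta; rewrite leq_subRL // => h.
  by rewrite addn1 -addn2 addnC.
have hu : 0 < 1 + Delta by have := ler0n R (maxdeg e); rewrite /Delta; lra.
have hm : 0 < n%:R - Delta - 1.
  have : ((maxdeg e + 1)%:R < n%:R :> R) by rewrite ltr_nat.
  rewrite natrD /Delta; lra.
split.
- move=> rho [_ hmax] i hi.
  have degi := hdegk i hi.
  have dpos := @deg_pos n e i hn hconn.
  pose P := 2 * Delta^+2.
  pose C := trans R e i + Delta * tv R e i - 2 * Delta^+2.
  pose E := S - 2 * (trans R e i + Delta * tv R e i) + 2 * Delta^+2.
  have ea : a i = P * (n%:R - Delta - 1) + E * (1 + Delta) by rewrite /a /P /E; ring.
  have eb : b i = C^+2 - P * E by rewrite /b /C /P /E; ring.
  have eden : den = 2 * (1 + Delta) * (n%:R - Delta - 1) by [].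
  rewrite ea eb eden; apply: upper_bound => // al be.
  have [h1 h2] := @key R n e i al be hsimple hbip hn dpos.
  move: h1 h2; rewrite degi -/Delta -/S => h1 h2.
  have := @ray_max _ _ _ _ As hmax (\row_j (be + (al - be) * (j \in i |: [set y | e i y])%:R)).
  by rewrite h1 h2.
- move=> rho [_ hmin] i hi.
  have degi := hdegk i hi.
  have dpos := @deg_pos n e i hn hconn.
  pose P := 2 * Delta^+2.
  pose C := trans R e i + Delta * tv R e i - 2 * Delta^+2.
  pose E := S - 2 * (trans R e i + Delta * tv R e i) + 2 * Delta^+2.
  have ea : a i = P * (n%:R - Delta - 1) + E * (1 + Delta) by rewrite /a /P /E; ring.
  have eb : b i = C^+2 - P * E by rewrite /b /C /P /E; ring.
  have eden : den = 2 * (1 + Delta) * (n%:R - Delta - 1) by [].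
  rewrite ea eb eden; apply: lower_bound => // al be.
  have [h1 h2] := @key R n e i al be hsimple hbip hn dpos.
  move: h1 h2; rewrite degi -/Delta -/S => h1 h2.
  have := @ray_min _ _ _ _ As hmin (\row_j (be + (al - be) * (j \in i |: [set y | e i y])%:R)).
  by rewrite h1 h2.
Qed.
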